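(* Let $f$ be a complex-valued harmonic function in a bounded open set $R\subset\mathbb{C}$. Suppose that $P=\operatorname{int}(\overline{R})\setminus R$ is empty or consists of finitely many poles of $f$, and suppose that $f$ has a $C^1$ extension to some open set $R_1\supset\overline{R}\setminus P$. Then $f(S)\cup f(\partial R\setminus P)$ has empty interior.
   Context: Writing $f=u+iv$, $J_f=u_xv_y-u_yv_x$ and $S=\{z\in R: J_f(z)=0\}$. A point $\alpha$ is a pole of $f$ if $f$ is harmonic in $\{z:0<|z-\alpha|<r\}$ for some $r>0$ and $\lim_{z\to\alpha}|f(z)|=\infty$. $f(\partial R\setminus P)$ denotes the image under the extension. *)

(* Defs.v *)
(* the plane C is modelled as R*R, with Coquelicot's total Derive
   for partial derivatives. *)
From Stdlib Require Import Reals List.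
From Coquelicot Require Import Coquelicot.
Open Scope R_scope.

Definition pt := (R * R)%type.

Definition dist (p q : pt) : R :=
  sqrt ((fst p - fst q) ^ 2 + (snd p - snd q) ^ 2).

Definition plane_open (A : pt -> Prop) : Prop :=
  forall p, A p -> exists r, 0 < r /\ forall q, dist p q < r -> A q.

Definition plane_bounded (A : pt -> Prop) : Prop :=
  exists M, forall p, A p -> dist p (0, 0) <= M.

Definition plane_closure (A : pt -> Prop) (p : pt) : Prop :=
  forall r, 0 < r -> exists q, A q /\ dist p q < r.

Definition plane_interior (A : pt -> Prop) (p : pt) : Prop :=
  exists r, 0 < r /\ forall q, dist p q < r -> A q.

Definition plane_boundary (A : pt -> Prop) (p : pt) : Prop :=
  plane_closure A p /\ ~ plane_interior A p.

Definition finite_set (A : pt -> Prop) : Prop :=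
  exists l : list pt, forall z, A z <-> In z l.

Definition cont_at (g : pt -> R) (p : pt) : Prop :=
  forall eps, 0 < eps -> exists d, 0 < d /\
    forall q, dist p q < d -> Rabs (g q - g p) < eps.

Definition dx (g : pt -> R) : pt -> R :=
  fun p => Derive (fun t => g (t, snd p)) (fst p).
Definition dy (g : pt -> R) : pt -> R :=
  fun p => Derive (fun t => g (fst p, t)) (snd p).

Definition C1_on (g : pt -> R) (U : pt -> Prop) : Prop :=
  forall p, U p ->
    ex_derive (fun t => g (t, snd p)) (fst p) /\
    ex_derive (fun t => g (fst p, t)) (snd p) /\
    cont_at g p /\ cont_at (dx g) p /\ cont_at (dy g) p.

Definition rharmonic_on (g : pt -> R) (U : pt -> Prop) : Prop :=
  C1_on g U /\ C1_on (dx g) U /\ C1_on (dy g) U /\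
  forall p, U p -> dx (dx g) p + dy (dy g) p = 0.

(* complex-valued function f = u + i v, as a map pt -> pt *)
Definition re (f : pt -> pt) : pt -> R := fun p => fst (f p).
Definition im (f : pt -> pt) : pt -> R := fun p => snd (f p).

Definition harmonic_on (f : pt -> pt) (U : pt -> Prop) : Prop :=
  rharmonic_on (re f) U /\ rharmonic_on (im f) U.

Definition C1_map_on (f : pt -> pt) (U : pt -> Prop) : Prop :=
  C1_on (re f) U /\ C1_on (im f) U.

Definition jac (f : pt -> pt) (p : pt) : R :=
  dx (re f) p * dy (im f) p - dy (re f) p * dx (im f) p.

Definition cnorm (w : pt) : R := sqrt (fst w ^ 2 + snd w ^ 2).

Definition is_pole (f : pt -> pt) (a : pt) : Prop :=
  (exists r, 0 < r /\ harmonic_on f (fun z => 0 < dist z a < r)) /\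
  (forall M, exists d, 0 < d /\
     forall z, 0 < dist z a < d -> M < cnorm (f z)).

(* Main.v *)
Require Import Defs.
From Coquelicot Require Import Coquelicot.
From Stdlib Require Import Reals Lra Lia List ClassicalEpsilon IndefiniteDescription Classical.
From Stdlib Require Cantor.
Require Import Defs.
Open Scope R_scope.

Definition cbox (c : pt) (r : R) (p : pt) : Prop :=
  Rabs (fst p - fst c) <= r /\ Rabs (snd p - snd c) <= r.
Definition obox (c : pt) (r : R) (p : pt) : Prop :=
  Rabs (fst p - fst c) < r /\ Rabs (snd p - snd c) < r.

Lemma dist_le_sum p q : dist p q <= Rabs (fst p - fst q) + Rabs (snd p - snd q).
Proof.
  unfold dist.
  set (x := fst p - fst q); set (y := snd p - snd q).
  rewrite <- (sqrt_Rsqr (Rabs x + Rabs y)) by (pose proof (Rabs_pos x); pose proof (Rabs_pos y); lra).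
  apply sqrt_le_1_alt. unfold Rsqr.
  assert (Hx : Rabs x * Rabs x = x * x) by (rewrite <- Rabs_mult; apply Rabs_pos_eq; nra).
  assert (Hy : Rabs y * Rabs y = y * y) by (rewrite <- Rabs_mult; apply Rabs_pos_eq; nra).
  pose proof (Rabs_pos x); pose proof (Rabs_pos y). nra.
Qed.

Lemma dist_ge1 p q : Rabs (fst p - fst q) <= dist p q.
Proof.
  unfold dist. rewrite <- sqrt_Rsqr_abs. apply sqrt_le_1_alt. unfold Rsqr.
  set (x := fst p - fst q); set (y := snd p - snd q). nra.
Qed.

Lemma dist_ge2 p q : Rabs (snd p - snd q) <= dist p q.
Proof.
  unfold dist. rewrite <- sqrt_Rsqr_abs. apply sqrt_le_1_alt. unfold Rsqr.
  set (x := fst p - fst q); set (y := snd p - snd q). nra.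
Qed.

Lemma obox_dist c r p : obox c (r/2) p -> dist c p < r.
Proof.
  intros [H1 H2]. pose proof (dist_le_sum c p).
  rewrite Rabs_minus_sym in H1. rewrite Rabs_minus_sym in H2. lra.
Qed.

Lemma dist_obox c r p : dist c p < r -> obox c r p.
Proof.
  intros H. pose proof (dist_ge1 c p); pose proof (dist_ge2 c p).
  split; rewrite Rabs_minus_sym; lra.
Qed.

Definition ND (F : pt -> Prop) : Prop :=
  forall w r, 0 < r -> exists w' r', 0 < r' /\
    (forall y, cbox w' r' y -> obox w r y) /\ (forall y, cbox w' r' y -> ~ F y).
Lemma arch_inv eps : 0 < eps -> exists K : nat, / (INR K + 1) < eps.
Proof.
  intros He. destruct (nfloor_ex (/ eps)) as [n [H1 H2]].
  { left; apply Rinv_0_lt_compat; lra. }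
  exists n. pose proof (pos_INR n).
  rewrite <- (Rinv_inv eps). apply Rinv_lt_contravar; try lra.
  apply Rmult_lt_0_compat; [apply Rinv_0_lt_compat|]; lra.
Qed.

Lemma lim_le (X : nat -> R) l a rho m :
  Un_cv X l -> (forall j, (m <= j)%nat -> Rabs (X j - a) <= rho) -> Rabs (l - a) <= rho.
Proof.
  intros Hcv Hb. destruct (Rle_dec (Rabs (l - a)) rho) as [|Hn]; auto.
  exfalso. apply Rnot_le_lt in Hn.
  destruct (Hcv (Rabs (l - a) - rho)) as [N HN]; [lra|].
  specialize (HN (max N m) (Nat.le_max_l _ _)). specialize (Hb (max N m) (Nat.le_max_r _ _)).
  unfold R_dist in HN.
  pose proof (Rabs_triang (l - X (max N m)) (X (max N m) - a)).
  replace (l - X (max N m) + (X (max N m) - a)) with (l - a) in H by ring.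
  rewrite Rabs_minus_sym in HN. lra.
Qed.

Lemma baire (F : nat -> pt -> Prop) : (forall k, ND (F k)) ->
  forall w r, 0 < r -> exists y, obox w r y /\ forall k, ~ F k y.
Proof.
  intros HND w r Hr.
  assert (Hst : forall x : nat * pt * R, exists y : pt * R,
    let '(k, c, rho) := x in 0 < rho ->
      0 < snd y /\ snd y <= / (INR k + 1) /\
      (forall z, cbox (fst y) (snd y) z -> obox c rho z) /\
      (forall z, cbox (fst y) (snd y) z -> ~ F k z)).
  { intros [[k c] rho].
    destruct (Rlt_dec 0 rho) as [Hp|Hp].
    - destruct (HND k c rho Hp) as [w' [r' [Hr' [H1 H2]]]].
      exists (w', Rmin r' (/ (INR k + 1))). intros _. simpl.
      assert (0 < / (INR k + 1)) by (apply Rinv_0_lt_compat; pose proof (pos_INR k); lra).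
      assert (Hsub : forall z, cbox w' (Rmin r' (/ (INR k + 1))) z -> cbox w' r' z).
      { intros z [Ha Hb]; pose proof (Rmin_l r' (/ (INR k + 1))); split; lra. }
      split; [|split; [|split]].
      + apply Rmin_glb_lt; lra.
      + apply Rmin_r.
      + intros z Hz; apply H1, Hsub, Hz.
      + intros z Hz; apply H2, Hsub, Hz.
    - exists (w, r). intros H; lra. }
  destruct (functional_choice _ Hst) as [G HG].
  set (sq := fix sq (n : nat) : pt * R :=
    match n with O => (w, r) | S k => G (k, fst (sq k), snd (sq k)) end).
  assert (Hpos : forall n, 0 < snd (sq n)).
  { induction n; simpl; auto. specialize (HG (n, fst (sq n), snd (sq n))). simpl in HG.
    apply HG; auto. }
  assert (HS : forall k, snd (sq (S k)) <= / (INR k + 1) /\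
      (forall z, cbox (fst (sq (S k))) (snd (sq (S k))) z -> obox (fst (sq k)) (snd (sq k)) z) /\
      (forall z, cbox (fst (sq (S k))) (snd (sq (S k))) z -> ~ F k z)).
  { intros k. specialize (HG (k, fst (sq k), snd (sq k))). simpl in HG.
    destruct (HG (Hpos k)) as [_ H]. exact H. }
  assert (Hnest : forall (m j : nat) z, cbox (fst (sq (Nat.add j m))) (snd (sq (Nat.add j m))) z ->
                               cbox (fst (sq m)) (snd (sq m)) z).
  { intros m j; induction j; intros z Hz; simpl Nat.add in *; auto.
    apply IHj. destruct (HS (Nat.add j m)) as [_ [H _]]. destruct (H z Hz). split; lra. }
  assert (Hc : forall m j, (m <= j)%nat -> cbox (fst (sq m)) (snd (sq m)) (fst (sq j))).
  { intros m j Hmj. replace j with (Nat.add (j - m) m) by lia. apply (Hnest m (j - m)%nat).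
    split; rewrite Rminus_diag, Rabs_R0; left; apply Hpos. }
  assert (Hrad : forall k, snd (sq (S k)) <= / (INR k + 1)) by (intros k; apply HS).
  assert (Hcauchy : forall (X : nat -> R),
     (forall m j, (m <= j)%nat -> Rabs (X j - X m) <= snd (sq m)) -> Cauchy_crit X).
  { intros X HX eps He. destruct (arch_inv (eps / 2)) as [K HK]; [lra|].
    exists (S K). intros n m Hn Hm. unfold R_dist.
    pose proof (HX (S K) n Hn). pose proof (HX (S K) m Hm). pose proof (Hrad K).
    pose proof (Rabs_triang (X n - X (S K)) (X (S K) - X m)).
    replace (X n - X (S K) + (X (S K) - X m)) with (X n - X m) in H2 by ring.
    rewrite (Rabs_minus_sym (X (S K))) in H2. lra. }
  destruct (R_complete (fun n => fst (fst (sq n)))) as [l1 Hl1].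
  { apply Hcauchy. intros m j Hmj. apply (Hc m j Hmj). }
  destruct (R_complete (fun n => snd (fst (sq n)))) as [l2 Hl2].
  { apply Hcauchy. intros m j Hmj. apply (Hc m j Hmj). }
  assert (Hy : forall m, cbox (fst (sq m)) (snd (sq m)) (l1, l2)).
  { intros m. split; simpl.
    - apply (lim_le _ _ _ _ m Hl1). intros j Hj. apply (Hc m j Hj).
    - apply (lim_le _ _ _ _ m Hl2). intros j Hj. apply (Hc m j Hj). }
  exists (l1, l2). split.
  - destruct (HS 0%nat) as [_ [H _]]. apply H, Hy.
  - intros k. destruct (HS k) as [_ [_ H]]. apply H, Hy.
Qed.

Lemma nd_F2 (Rs : pt -> Prop) (u v : pt -> R) c e k :
  plane_open Rs -> 0 < e -> 0 < k ->
  (forall p, cbox c e p -> cont_at u p /\ cont_at v p) ->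
  (forall p q, obox c (2*e) p -> obox c (2*e) q ->
     k * (Rabs (fst p - fst q) + Rabs (snd p - snd q)) <= Rabs (u p - u q) + Rabs (v p - v q)) ->
  ND (fun y => exists z, cbox c e z /\ plane_boundary Rs z /\ (u z, v z) = y).
Proof.
  intros Hop He Hk Hcont Hlow w r Hr.
  destruct (classic (exists z, cbox c e z /\ plane_boundary Rs z /\
              obox w (r/2) (u z, v z))) as [[z' [Hz'Q [Hz'b Hz'w]]] | Hno].
  2:{ exists w, (r/4). split; [lra|]. split.
      - intros y [H1 H2]; split; lra.
      - intros y [H1 H2] [z [Hz1 [Hz2 Hz3]]]. apply Hno. exists z. split; auto. split; auto.
        rewrite Hz3. split; lra. }
  destruct (Hcont z' Hz'Q) as [Hcu Hcv].
  destruct (Hcu (r/4)) as [du [Hdu Hu]]; [lra|].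
  destruct (Hcv (r/4)) as [dv [Hdv Hv]]; [lra|].
  destruct Hz'b as [Hcl Hnint].
  destruct (Hcl (Rmin e (Rmin du dv))) as [z'' [Hz''R Hd]].
  { apply Rmin_glb_lt; auto. apply Rmin_glb_lt; auto. }
  pose proof (Rmin_l e (Rmin du dv)). pose proof (Rmin_r e (Rmin du dv)).
  pose proof (Rmin_l du dv). pose proof (Rmin_r du dv).
  specialize (Hu z'' ltac:(lra)). specialize (Hv z'' ltac:(lra)).
  destruct (Hop z'' Hz''R) as [r0 [Hr0 Hball]].
  assert (Hz''O : obox c (2*e) z'').
  { pose proof (dist_ge1 z' z''); pose proof (dist_ge2 z' z''). destruct Hz'Q as [Q1 Q2].
    split.
    - pose proof (Rabs_triang (fst z'' - fst z') (fst z' - fst c)).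
      replace (fst z'' - fst z' + (fst z' - fst c)) with (fst z'' - fst c) in H5 by ring.
      rewrite Rabs_minus_sym in H3. lra.
    - pose proof (Rabs_triang (snd z'' - snd z') (snd z' - snd c)).
      replace (snd z'' - snd z' + (snd z' - snd c)) with (snd z'' - snd c) in H5 by ring.
      rewrite Rabs_minus_sym in H4. lra. }
  set (rho := Rmin (r/8) (k * r0 / 8)).
  assert (Hrho : 0 < rho) by (apply Rmin_glb_lt; [lra| assert (0 < k*r0) by (apply Rmult_lt_0_compat; auto); lra]).
  pose proof (Rmin_l (r/8) (k * r0 / 8)). pose proof (Rmin_r (r/8) (k * r0 / 8)).
  fold rho in H3, H4.
  exists (u z'', v z''), rho. split; auto. split.
  - intros y [Y1 Y2]. simpl in Y1, Y2. destruct Hz'w as [W1 W2]. simpl in W1, W2.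
    split.
    + pose proof (Rabs_triang (fst y - u z'') (u z'' - u z')).
      pose proof (Rabs_triang (fst y - u z'' + (u z'' - u z')) (u z' - fst w)).
      replace (fst y - u z'' + (u z'' - u z') + (u z' - fst w)) with (fst y - fst w) in H6 by ring.
      lra.
    + pose proof (Rabs_triang (snd y - v z'') (v z'' - v z')).
      pose proof (Rabs_triang (snd y - v z'' + (v z'' - v z')) (v z' - snd w)).
      replace (snd y - v z'' + (v z'' - v z') + (v z' - snd w)) with (snd y - snd w) in H6 by ring.
      lra.
  - intros y [Y1 Y2] [kk [HkQ [[_ Hkb] Hky]]].
    rewrite <- Hky in Y1, Y2. simpl in Y1, Y2.
    assert (HkO : obox c (2*e) kk) by (destruct HkQ; split; lra).
    pose proof (Hlow kk z'' HkO Hz''O) as HL.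
    assert (Hfar : r0 <= Rabs (fst kk - fst z'') + Rabs (snd kk - snd z'')).
    { destruct (Rle_dec r0 (Rabs (fst kk - fst z'') + Rabs (snd kk - snd z''))) as [|Hn]; auto.
      exfalso. apply Hkb. apply Hop. apply Hball.
      pose proof (dist_le_sum z'' kk).
      rewrite (Rabs_minus_sym (fst z'')), (Rabs_minus_sym (snd z'')) in H5. lra. }
    assert (k * r0 <= k * (Rabs (fst kk - fst z'') + Rabs (snd kk - snd z''))) by
      (apply Rmult_le_compat_l; lra).
    lra.
Qed.

Lemma cont_line_x (g : pt -> R) y x : cont_at g (x, y) -> continuity_pt (fun t => g (t, y)) x.
Proof.
  intros Hc. unfold continuity_pt, continue_in, limit1_in, limit_in. intros eps He.
  destruct (Hc eps He) as [d [Hd H]]. exists d. split; auto.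
  intros s [_ Hs]. simpl in *. unfold R_dist in *. apply H.
  pose proof (dist_le_sum (x, y) (s, y)). simpl in H0.
  rewrite Rminus_diag, Rabs_R0 in H0. rewrite Rabs_minus_sym in Hs. lra.
Qed.

Lemma cont_line_y (g : pt -> R) x y : cont_at g (x, y) -> continuity_pt (fun t => g (x, t)) y.
Proof.
  intros Hc. unfold continuity_pt, continue_in, limit1_in, limit_in. intros eps He.
  destruct (Hc eps He) as [d [Hd H]]. exists d. split; auto.
  intros s [_ Hs]. simpl in *. unfold R_dist in *. apply H.
  pose proof (dist_le_sum (x, y) (x, s)). simpl in H0.
  rewrite Rminus_diag, Rabs_R0 in H0. rewrite Rabs_minus_sym in Hs. lra.
Qed.

Lemma mvt2 (g : pt -> R) (U : pt -> Prop) (a b : pt) :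
  C1_on g U ->
  (forall t, Rmin (fst a) (fst b) <= t <= Rmax (fst a) (fst b) -> U (t, snd a)) ->
  (forall t, Rmin (snd a) (snd b) <= t <= Rmax (snd a) (snd b) -> U (fst b, t)) ->
  exists t t', Rmin (fst a) (fst b) <= t <= Rmax (fst a) (fst b) /\
    Rmin (snd a) (snd b) <= t' <= Rmax (snd a) (snd b) /\
    g b - g a = dx g (t, snd a) * (fst b - fst a) + dy g (fst b, t') * (snd b - snd a).
Proof.
  intros HC H1 H2.
  destruct (MVT_gen (fun t => g (t, snd a)) (fst a) (fst b) (fun t => dx g (t, snd a))) as [t [Ht Et]].
  { intros x Hx. destruct (HC (x, snd a) (H1 x ltac:(lra))) as [Hd _]. simpl in Hd.
    apply (Derive_correct _ _ Hd). }
  { intros x Hx. destruct (HC (x, snd a) (H1 x Hx)) as [_ [_ [Hc _]]]. apply cont_line_x, Hc. }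
  destruct (MVT_gen (fun t => g (fst b, t)) (snd a) (snd b) (fun t => dy g (fst b, t))) as [t' [Ht' Et']].
  { intros x Hx. destruct (HC (fst b, x) (H2 x ltac:(lra))) as [_ [Hd _]]. simpl in Hd.
    apply (Derive_correct _ _ Hd). }
  { intros x Hx. destruct (HC (fst b, x) (H2 x Hx)) as [_ [_ [Hc _]]]. apply cont_line_y, Hc. }
  exists t, t'. split; auto. split; auto.
  simpl in Et, Et'. destruct a as [a1 a2], b as [b1 b2]. simpl in *. lra.
Qed.

Lemma unif_cont (g : pt -> R) c e : (forall p, cbox c e p -> cont_at g p) ->
  forall eta, 0 < eta -> exists delta, 0 < delta /\ forall p q, cbox c e p -> cbox c e q ->
    Rabs (fst p - fst q) < delta -> Rabs (snd p - snd q) < delta -> Rabs (g p - g q) < eta.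
Proof.
  intros Hc eta He.
  assert (Hg : forall uv : R * R, exists d : posreal, cbox c e uv ->
     forall q, dist uv q < 4 * d -> Rabs (g q - g uv) < eta / 2).
  { intros uv. destruct (classic (cbox c e uv)) as [Hin|Hout].
    - destruct (Hc uv Hin (eta/2)) as [d0 [Hd0 H]]; [lra|].
      assert (Hp : 0 < d0 / 4) by lra. exists (mkposreal _ Hp). intros _ q Hq. apply H. simpl in Hq. lra.
    - exists (mkposreal 1 Rlt_0_1). intros H; contradiction. }
  destruct (functional_choice _ Hg) as [D HD].
  destruct (compactness_value_2d (fst c - e) (fst c + e) (snd c - e) (snd c + e)
              (fun u v => D (u, v))) as [d' Hd'].
  exists d'. split; [apply cond_pos|].
  intros p q Hp Hq H1 H2.
  assert (Hpb1 : fst c - e <= fst p <= fst c + e) by (destruct Hp as [Hp1 _]; apply Rabs_le_between' in Hp1; lra).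
  assert (Hpb2 : snd c - e <= snd p <= snd c + e) by (destruct Hp as [_ Hp1]; apply Rabs_le_between' in Hp1; lra).
  specialize (Hd' (fst p) (snd p) Hpb1 Hpb2).
  apply NNPP. intro Hneg. apply Hd'. intros [u [v [Hu [Hv [Hpu [Hpv Hdd]]]]]].
  apply Hneg.
  assert (Huv : cbox c e (u, v)).
  { split; simpl; apply Rabs_le_between'; lra. }
  specialize (HD (u, v) Huv).
  assert (A1 : Rabs (g p - g (u, v)) < eta / 2).
  { apply HD. pose proof (dist_le_sum (u, v) p). simpl in H. 
    rewrite (Rabs_minus_sym u), (Rabs_minus_sym v) in H.
    pose proof (cond_pos (D (u, v))). lra. }
  assert (A2 : Rabs (g q - g (u, v)) < eta / 2).
  { apply HD. pose proof (dist_le_sum (u, v) q). simpl in H.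
    pose proof (Rabs_triang (u - fst p) (fst p - fst q)).
    pose proof (Rabs_triang (v - snd p) (snd p - snd q)).
    replace (u - fst p + (fst p - fst q)) with (u - fst q) in H0 by ring.
    replace (v - snd p + (snd p - snd q)) with (v - snd q) in H3 by ring.
    rewrite (Rabs_minus_sym u (fst p)) in H0. rewrite (Rabs_minus_sym v (snd p)) in H3.
    pose proof (cond_pos (D (u, v))). lra. }
  pose proof (Rabs_triang (g p - g (u, v)) (g (u, v) - g q)).
  replace (g p - g (u, v) + (g (u, v) - g q)) with (g p - g q) in H by ring.
  rewrite (Rabs_minus_sym (g (u, v))) in H. lra.
Qed.

Lemma cell1d (N : nat) (h a x : R) : 0 < h -> (1 <= N)%nat ->
  a <= x <= a + INR N * h -> exists i, (i < N)%nat /\ a + INR i * h <= x <= a + (INR i + 1) * h.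
Proof.
  intros Hh HN. induction N as [|N IH]; [lia|]. intros Hx.
  destruct (Nat.eq_dec N 0) as [->|HN0].
  - exists 0%nat. split; [lia|]. simpl in *. lra.
  - destruct (Rle_dec x (a + INR N * h)) as [Hle|Hgt].
    + destruct (IH ltac:(lia) ltac:(lra)) as [i [Hi Hx']]. exists i. split; [lia|auto].
    + exists N. split; [lia|]. rewrite S_INR in Hx. lra.
Qed.

Lemma pigeon (m n : nat) (g : nat -> nat) :
  (forall x, (x < m)%nat -> (g x < n)%nat) ->
  (forall x y, (x < m)%nat -> (y < m)%nat -> g x = g y -> x = y) -> (m <= n)%nat.
Proof.
  intros Hb Hi.
  assert (H : (length (map g (seq 0 m)) <= length (seq 0 n))%nat).
  { apply NoDup_incl_length.
    - apply NoDup_map_NoDup_ForallPairs; [|apply seq_NoDup].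
      intros x y Hx Hy. apply in_seq in Hx, Hy. apply Hi; lia.
    - intros y Hy. apply in_map_iff in Hy. destruct Hy as [x [<- Hx]].
      apply in_seq in Hx. apply in_seq. specialize (Hb x ltac:(lia)). lia. }
  rewrite length_map, !length_seq in H. exact H.
Qed.

Lemma code_inj (a a' p p' k : nat) : (p < k)%nat -> (p' < k)%nat ->
  (a * k + p = a' * k + p')%nat -> a = a' /\ p = p'.
Proof.
  intros Hp Hp' E.
  destruct (Nat.lt_trichotomy a a') as [Hl|[He|Hl]].
  - exfalso. assert (a * k + k <= a' * k)%nat by nia. lia.
  - subst. lia.
  - exfalso. assert (a' * k + k <= a * k)%nat by nia. lia.
Qed.

Lemma between_box x y t c r : Rmin x y <= t <= Rmax x y -> Rabs (x - c) <= r -> Rabs (y - c) <= r ->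
  Rabs (t - c) <= r /\ Rabs (t - x) <= Rabs (y - x).
Proof.
  intros [H1 H2] Hx Hy. unfold Rmin, Rmax in *.
  destruct (Rle_dec x y); split_Rabs; lra.
Qed.

Lemma lin_approx (g : pt -> R) U c e cc h eta delta :
  C1_on g U -> (forall p, cbox c e p -> U p) -> (forall p, cbox cc (h/2) p -> cbox c e p) ->
  0 <= h -> h < delta ->
  (forall p q, cbox c e p -> cbox c e q -> Rabs (fst p - fst q) < delta -> Rabs (snd p - snd q) < delta ->
     Rabs (dx g p - dx g q) < eta /\ Rabs (dy g p - dy g q) < eta) ->
  forall z zc, cbox cc (h/2) z -> cbox cc (h/2) zc ->
  Rabs (g z - g zc - (dx g zc * (fst z - fst zc) + dy g zc * (snd z - snd zc))) <= 2 * eta * h.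
Proof.
  intros HC HU Hsub Hh Hhd Huc z zc [Hz1 Hz2] [Hc1 Hc2].
  assert (Hd1 : Rabs (fst z - fst zc) <= h).
  { pose proof (Rabs_triang (fst z - fst cc) (fst cc - fst zc)).
    replace (fst z - fst cc + (fst cc - fst zc)) with (fst z - fst zc) in H by ring.
    rewrite (Rabs_minus_sym (fst cc)) in H. lra. }
  assert (Hd2 : Rabs (snd z - snd zc) <= h).
  { pose proof (Rabs_triang (snd z - snd cc) (snd cc - snd zc)).
    replace (snd z - snd cc + (snd cc - snd zc)) with (snd z - snd zc) in H by ring.
    rewrite (Rabs_minus_sym (snd cc)) in H. lra. }
  destruct (mvt2 g U zc z HC) as [t [t' [Ht [Ht' E]]]].
  { intros t Ht. apply HU, Hsub. destruct (between_box _ _ _ _ _ Ht Hc1 Hz1). split; simpl; auto. }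
  { intros t Ht. apply HU, Hsub. destruct (between_box _ _ _ _ _ Ht Hc2 Hz2). split; simpl; auto. }
  destruct (between_box _ _ _ _ _ Ht Hc1 Hz1) as [Bt1 Bt2].
  destruct (between_box _ _ _ _ _ Ht' Hc2 Hz2) as [Bt1' Bt2'].
  assert (HzcQ : cbox c e zc) by (apply Hsub; split; auto).
  destruct (Huc (t, snd zc) zc) as [E1 _].
  { apply Hsub; split; simpl; auto. }
  { auto. }
  { simpl. lra. }
  { simpl. rewrite Rminus_diag, Rabs_R0. lra. }
  destruct (Huc (fst z, t') zc) as [_ E2].
  { apply Hsub; split; simpl; auto. }
  { auto. }
  { simpl. lra. }
  { simpl. lra. }
  rewrite E.
  replace (dx g (t, snd zc) * (fst z - fst zc) + dy g (fst z, t') * (snd z - snd zc) -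
     (dx g zc * (fst z - fst zc) + dy g zc * (snd z - snd zc))) with
    ((dx g (t, snd zc) - dx g zc) * (fst z - fst zc) + (dy g (fst z, t') - dy g zc) * (snd z - snd zc)) by ring.
  eapply Rle_trans; [apply Rabs_triang|]. rewrite !Rabs_mult.
  assert (Rabs (dx g (t, snd zc) - dx g zc) * Rabs (fst z - fst zc) <= eta * h).
  { apply Rmult_le_compat; try apply Rabs_pos; lra. }
  assert (Rabs (dy g (fst z, t') - dy g zc) * Rabs (snd z - snd zc) <= eta * h).
  { apply Rmult_le_compat; try apply Rabs_pos; lra. }
  lra.
Qed.

Lemma rank1 a b c d : a * d - b * c = 0 -> c ^ 2 + d ^ 2 <= a ^ 2 + b ^ 2 ->
  exists l, Rabs l <= 1 /\ c = l * a /\ d = l * b.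
Proof.
  intros Hj Hle.
  destruct (Req_dec (a ^ 2 + b ^ 2) 0) as [H0|H0].
  - exists 0. assert (a = 0) by nra. assert (b = 0) by nra. assert (c = 0) by nra. assert (d = 0) by nra.
    subst. rewrite Rabs_R0. split; [lra|split; ring].
  - set (l := (a * c + b * d) / (a ^ 2 + b ^ 2)).
    assert (E : a * d = b * c) by lra.
    assert (E1 : c * (a ^ 2 + b ^ 2) = (a * c + b * d) * a).
    { replace (c * (a ^ 2 + b ^ 2)) with (c * a ^ 2 + b * (b * c)) by ring. rewrite <- E. ring. }
    assert (E2 : d * (a ^ 2 + b ^ 2) = (a * c + b * d) * b).
    { replace (d * (a ^ 2 + b ^ 2)) with (a * (a * d) + d * b ^ 2) by ring. rewrite E. ring. }
    assert (Hc : c = l * a) by (unfold l; field_simplify_eq; [lra|auto]).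
    assert (Hd : d = l * b) by (unfold l; field_simplify_eq; [lra|auto]).
    exists l. split; [|auto].
    assert (l ^ 2 * (a ^ 2 + b ^ 2) <= 1 * (a ^ 2 + b ^ 2)) by (rewrite Hc, Hd in Hle; nra).
    assert (l ^ 2 <= 1) by (apply Rmult_le_reg_r with (a ^ 2 + b ^ 2); nra).
    apply Rabs_le. nra.
Qed.

Lemma piece (k : nat) (B X : R) : 0 < B -> (1 <= k)%nat -> Rabs X <= B ->
  exists p, (p < k)%nat /\ Rabs (X - (- B + (INR p + /2) * (2 * B / INR k))) <= B / INR k.
Proof.
  intros HB Hk HX.
  assert (Hk0 : 0 < INR k) by (apply lt_0_INR; lia).
  destruct (cell1d k (2 * B / INR k) (- B) X) as [p [Hp Hx]]; auto.
  { apply Rdiv_lt_0_compat; lra. }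
  { replace (INR k * (2 * B / INR k)) with (2 * B) by (field; lra). assert (- B <= X <= B) by (revert HX; unfold Rabs; destruct Rcase_abs; intros; lra). lra. }
  exists p. split; auto.
  replace (B / INR k) with ((2 * B / INR k) / 2) by (field; lra).
  apply Rabs_le. lra.
Qed.

Lemma cell_cover (u v : pt -> R) (U : pt -> Prop) c e cc h eta delta Mb (k : nat) :
  C1_on u U -> C1_on v U ->
  (forall p, cbox c e p -> U p) -> (forall p, cbox cc (h/2) p -> cbox c e p) ->
  0 < h -> h < delta -> 0 < Mb -> (1 <= k)%nat ->
  (forall p, cbox c e p -> Rabs (dx u p) <= Mb /\ Rabs (dy u p) <= Mb /\
                          Rabs (dx v p) <= Mb /\ Rabs (dy v p) <= Mb) ->
  (forall p q, cbox c e p -> cbox c e q -> Rabs (fst p - fst q) < delta -> Rabs (snd p - snd q) < delta ->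
     Rabs (dx u p - dx u q) < eta /\ Rabs (dy u p - dy u q) < eta /\
     Rabs (dx v p - dx v q) < eta /\ Rabs (dy v p - dy v q) < eta) ->
  exists cen : nat -> pt, forall z, cbox cc (h/2) z ->
     dx u z * dy v z - dy u z * dx v z = 0 ->
     exists p, (p < k)%nat /\ cbox (cen p) (2 * Mb * h / INR k + 2 * eta * h) (u z, v z).
Proof.
  intros HCu HCv HU Hsub Hh Hhd HMb Hk Hbd Huc.
  destruct (classic (exists z, cbox cc (h/2) z /\ dx u z * dy v z - dy u z * dx v z = 0))
    as [[zc [Hzc Jzc]] | Hno].
  2:{ exists (fun _ => cc). intros z Hz Jz. exfalso. apply Hno. eauto. }
  assert (Lu := lin_approx u U c e cc h eta delta HCu HU Hsub ltac:(lra) Hhd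
     ltac:(intros p q H1 H2 H3 H4; destruct (Huc p q H1 H2 H3 H4) as [? [? _]]; auto)).
  assert (Lv := lin_approx v U c e cc h eta delta HCv HU Hsub ltac:(lra) Hhd
     ltac:(intros p q H1 H2 H3 H4; destruct (Huc p q H1 H2 H3 H4) as [_ [_ [? ?]]]; auto)).
  destruct (Hbd zc (Hsub zc Hzc)) as [Ba [Bb [Bc Bd]]].
  set (a := dx u zc) in *. set (b := dy u zc) in *. set (c' := dx v zc) in *. set (d := dy v zc) in *.
  set (B := 2 * Mb * h).
  assert (HB : 0 < B) by (unfold B; nra).
  assert (Hk0 : 0 < INR k) by (apply lt_0_INR; lia).
  set (Xs := fun p : nat => - B + (INR p + /2) * (2 * B / INR k)).
  assert (HD : forall z, cbox cc (h/2) z -> Rabs (fst z - fst zc) <= h /\ Rabs (snd z - snd zc) <= h).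
  { intros z [Hz1 Hz2]. destruct Hzc as [Hc1 Hc2]. split.
    - pose proof (Rabs_triang (fst z - fst cc) (fst cc - fst zc)).
      replace (fst z - fst cc + (fst cc - fst zc)) with (fst z - fst zc) in H by ring.
      rewrite (Rabs_minus_sym (fst cc)) in H. lra.
    - pose proof (Rabs_triang (snd z - snd cc) (snd cc - snd zc)).
      replace (snd z - snd cc + (snd cc - snd zc)) with (snd z - snd zc) in H by ring.
      rewrite (Rabs_minus_sym (snd cc)) in H. lra. }
  assert (Hlin : forall a0 b0 x y, Rabs a0 <= Mb -> Rabs b0 <= Mb -> Rabs x <= h -> Rabs y <= h ->
             Rabs (a0 * x + b0 * y) <= B).
  { intros a0 b0 x y H1 H2 H3 H4. eapply Rle_trans; [apply Rabs_triang|]. rewrite !Rabs_mult.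
    assert (Rabs a0 * Rabs x <= Mb * h) by (apply Rmult_le_compat; try apply Rabs_pos; lra).
    assert (Rabs b0 * Rabs y <= Mb * h) by (apply Rmult_le_compat; try apply Rabs_pos; lra).
    unfold B; lra. }
  destruct (Rle_dec (c' ^ 2 + d ^ 2) (a ^ 2 + b ^ 2)) as [Hle|Hgt].
  - destruct (rank1 a b c' d ltac:(lra) Hle) as [l [Hl [Hc Hd]]].
    exists (fun p => (u zc + Xs p, v zc + l * Xs p)).
    intros z Hz Jz. destruct (HD z Hz) as [D1 D2].
    set (X0 := a * (fst z - fst zc) + b * (snd z - snd zc)).
    destruct (piece k B X0 HB Hk (Hlin _ _ _ _ Ba Bb D1 D2)) as [p [Hp HX]].
    exists p. split; auto. specialize (Lu z zc Hz Hzc). specialize (Lv z zc Hz Hzc).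
    fold a b X0 in Lu. fold c' d in Lv.
    assert (Hv : c' * (fst z - fst zc) + d * (snd z - snd zc) = l * X0) by (unfold X0; rewrite Hc, Hd; ring).
    rewrite Hv in Lv. fold (Xs p) in HX.
    split; simpl.
    + replace (u z - (u zc + Xs p)) with ((u z - u zc - X0) + (X0 - Xs p)) by ring.
      eapply Rle_trans; [apply Rabs_triang|]. lra.
    + replace (v z - (v zc + l * Xs p)) with ((v z - v zc - l * X0) + l * (X0 - Xs p)) by ring.
      eapply Rle_trans; [apply Rabs_triang|]. rewrite Rabs_mult.
      assert (Rabs l * Rabs (X0 - Xs p) <= 1 * (B / INR k)) by (apply Rmult_le_compat; try apply Rabs_pos; lra).
      lra.
  - destruct (rank1 c' d a b ltac:(lra) ltac:(lra)) as [l [Hl [Hc Hd]]].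
    exists (fun p => (u zc + l * Xs p, v zc + Xs p)).
    intros z Hz Jz. destruct (HD z Hz) as [D1 D2].
    set (X0 := c' * (fst z - fst zc) + d * (snd z - snd zc)).
    destruct (piece k B X0 HB Hk (Hlin _ _ _ _ Bc Bd D1 D2)) as [p [Hp HX]].
    exists p. split; auto. specialize (Lu z zc Hz Hzc). specialize (Lv z zc Hz Hzc).
    fold a b in Lu. fold c' d X0 in Lv.
    assert (Hv : a * (fst z - fst zc) + b * (snd z - snd zc) = l * X0) by (unfold X0; rewrite Hc, Hd; ring).
    rewrite Hv in Lu. fold (Xs p) in HX.
    split; simpl.
    + replace (u z - (u zc + l * Xs p)) with ((u z - u zc - l * X0) + l * (X0 - Xs p)) by ring.
      eapply Rle_trans; [apply Rabs_triang|]. rewrite Rabs_mult.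
      assert (Rabs l * Rabs (X0 - Xs p) <= 1 * (B / INR k)) by (apply Rmult_le_compat; try apply Rabs_pos; lra).
      lra.
    + replace (v z - (v zc + Xs p)) with ((v z - v zc - X0) + (X0 - Xs p)) by ring.
      eapply Rle_trans; [apply Rabs_triang|]. lra.
Qed.

Lemma INR_sep (a b : nat) : a <> b -> 1 <= Rabs (INR a - INR b).
Proof.
  intros H. destruct (Nat.lt_gt_cases a b) as [[Hl|Hl] _]; auto.
  - apply le_INR in Hl. rewrite S_INR in Hl. rewrite Rabs_minus_sym, Rabs_pos_eq; lra.
  - apply le_INR in Hl. rewrite S_INR in Hl. rewrite Rabs_pos_eq; lra.
Qed.

Lemma nd_F1 (u v : pt -> R) U c e Mb :
  C1_on u U -> C1_on v U -> 0 < e -> (forall p, cbox c e p -> U p) ->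
  (forall p, cbox c e p -> Rabs (dx u p) <= Mb /\ Rabs (dy u p) <= Mb /\
                          Rabs (dx v p) <= Mb /\ Rabs (dy v p) <= Mb) ->
  ND (fun y => exists z, cbox c e z /\ dx u z * dy v z - dy u z * dx v z = 0 /\ (u z, v z) = y).
Proof.
  intros HCu HCv He HU HMb w r Hr.
  set (Mb' := Rabs Mb + 1).
  assert (HMb1 : 1 <= Mb') by (unfold Mb'; pose proof (Rabs_pos Mb); lra).
  assert (HMb' : forall p, cbox c e p -> Rabs (dx u p) <= Mb' /\ Rabs (dy u p) <= Mb' /\
                          Rabs (dx v p) <= Mb' /\ Rabs (dy v p) <= Mb').
  { intros p Hp. destruct (HMb p Hp) as [? [? [? ?]]]. pose proof (Rle_abs Mb). unfold Mb'.
    repeat split; lra. }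
  set (s := r / 2).
  assert (Hs : 0 < s) by (unfold s; lra).
  set (eta := Rmin 1 (s ^ 2 / (800 * e ^ 2 * Mb'))).
  assert (Heta : 0 < eta).
  { unfold eta. apply Rmin_glb_lt; [lra|]. apply Rdiv_lt_0_compat; [nra|].
    apply Rmult_lt_0_compat; [nra|lra]. }
  assert (Heta1 : eta <= 1) by apply Rmin_l.
  assert (Heta2 : eta * (800 * e ^ 2 * Mb') <= s ^ 2).
  { pose proof (Rmin_r 1 (s ^ 2 / (800 * e ^ 2 * Mb'))). fold eta in H.
    assert (0 < 800 * e ^ 2 * Mb') by (apply Rmult_lt_0_compat; [nra|lra]).
    apply Rmult_le_compat_r with (r := 800 * e ^ 2 * Mb') in H; [|lra].
    replace (s ^ 2 / (800 * e ^ 2 * Mb') * (800 * e ^ 2 * Mb')) with (s ^ 2) in H by (field; lra). lra. }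
  assert (Hc1 : forall g, C1_on g U -> forall p, cbox c e p -> cont_at (dx g) p /\ cont_at (dy g) p).
  { intros g Hg p Hp. destruct (Hg p (HU p Hp)) as [_ [_ [_ [? ?]]]]. auto. }
  destruct (unif_cont (dx u) c e (fun p Hp => proj1 (Hc1 u HCu p Hp)) eta Heta) as [d1 [Hd1 U1]].
  destruct (unif_cont (dy u) c e (fun p Hp => proj2 (Hc1 u HCu p Hp)) eta Heta) as [d2 [Hd2 U2]].
  destruct (unif_cont (dx v) c e (fun p Hp => proj1 (Hc1 v HCv p Hp)) eta Heta) as [d3 [Hd3 U3]].
  destruct (unif_cont (dy v) c e (fun p Hp => proj2 (Hc1 v HCv p Hp)) eta Heta) as [d4 [Hd4 U4]].
  set (delta := Rmin (Rmin d1 d2) (Rmin d3 d4)).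
  assert (Hdel : 0 < delta) by (unfold delta; repeat apply Rmin_glb_lt; auto).
  assert (Hdl : delta <= d1 /\ delta <= d2 /\ delta <= d3 /\ delta <= d4).
  { unfold delta. pose proof (Rmin_l (Rmin d1 d2) (Rmin d3 d4)). pose proof (Rmin_r (Rmin d1 d2) (Rmin d3 d4)).
    pose proof (Rmin_l d1 d2). pose proof (Rmin_r d1 d2). pose proof (Rmin_l d3 d4). pose proof (Rmin_r d3 d4).
    lra. }
  assert (HUC : forall p q, cbox c e p -> cbox c e q -> Rabs (fst p - fst q) < delta ->
     Rabs (snd p - snd q) < delta ->
     Rabs (dx u p - dx u q) < eta /\ Rabs (dy u p - dy u q) < eta /\
     Rabs (dx v p - dx v q) < eta /\ Rabs (dy v p - dy v q) < eta).
  { intros p q Hp Hq H1 H2. repeat split; [apply U1|apply U2|apply U3|apply U4]; auto; lra. }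
  set (tau := Rmin delta (s / 4)).
  assert (Htau : 0 < tau) by (unfold tau; apply Rmin_glb_lt; lra).
  destruct (arch_inv (tau / (2 * e))) as [K HK].
  { apply Rdiv_lt_0_compat; lra. }
  set (N := S K).
  assert (HN : INR N = INR K + 1) by (unfold N; apply S_INR).
  assert (HN0 : 0 < INR N) by (rewrite HN; pose proof (pos_INR K); lra).
  set (h := 2 * e / INR N).
  assert (Hh : 0 < h) by (unfold h; apply Rdiv_lt_0_compat; lra).
  assert (HNh : INR N * h = 2 * e) by (unfold h; field; lra).
  assert (Hhtau : h < tau).
  { unfold h. rewrite HN. unfold Rdiv. rewrite Rmult_comm.
    apply Rmult_lt_reg_r with (/ (2 * e)); [apply Rinv_0_lt_compat; lra|].
    replace (/ (INR K + 1) * (2 * e) * / (2 * e)) with (/ (INR K + 1)) by (field; split; lra).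
    exact HK. }
  assert (Hhd : h < delta) by (pose proof (Rmin_l delta (s/4)); fold tau in H; lra).
  assert (Hhs : h < s / 4) by (pose proof (Rmin_r delta (s/4)); fold tau in H; lra).
  destruct (nfloor_ex (Mb' / eta)) as [k0 [Hk0a Hk0b]].
  { left; apply Rdiv_lt_0_compat; lra. }
  set (k := S k0).
  assert (Hk : INR k = INR k0 + 1) by (unfold k; apply S_INR).
  assert (Hk1 : (1 <= k)%nat) by (unfold k; lia).
  assert (Hkpos : 0 < INR k) by (rewrite Hk; pose proof (pos_INR k0); lra).
  assert (Hketa : Mb' <= eta * INR k).
  { rewrite Hk. apply Rmult_lt_compat_l with (r := eta) in Hk0b; auto.
    unfold Rdiv in Hk0b. replace (eta * (Mb' * / eta)) with Mb' in Hk0b by (field; lra). lra. }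
  assert (Hketa2 : eta * INR k <= 2 * Mb').
  { rewrite Hk. apply Rmult_le_compat_l with (r := eta) in Hk0a; [|lra].
    unfold Rdiv in Hk0a. replace (eta * (Mb' * / eta)) with Mb' in Hk0a by (field; lra). nra. }
  set (cc := fun i j : nat => (fst c - e + (INR i + /2) * h, snd c - e + (INR j + /2) * h)).
  assert (Hcell : forall i j, (i < N)%nat -> (j < N)%nat -> forall p, cbox (cc i j) (h/2) p -> cbox c e p).
  { intros i j Hi Hj p [P1 P2]. unfold cc in P1, P2; simpl in P1, P2.
    assert (INR i + 1 <= INR N) by (rewrite <- S_INR; apply le_INR; lia).
    assert (INR j + 1 <= INR N) by (rewrite <- S_INR; apply le_INR; lia).
    pose proof (pos_INR i). pose proof (pos_INR j).
    revert P1 P2. unfold Rabs. destruct Rcase_abs; destruct Rcase_abs; intros; split;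
    apply Rabs_le; nra. }
  assert (Hch : forall ij : nat * nat, exists cen : nat -> pt,
     (fst ij < N)%nat -> (snd ij < N)%nat ->
     forall z, cbox (cc (fst ij) (snd ij)) (h/2) z ->
     dx u z * dy v z - dy u z * dx v z = 0 ->
     exists p, (p < k)%nat /\ cbox (cen p) (2 * Mb' * h / INR k + 2 * eta * h) (u z, v z)).
  { intros [i j]. simpl. destruct (classic ((i < N)%nat /\ (j < N)%nat)) as [[Hi Hj]|Hn].
    - destruct (cell_cover u v U c e (cc i j) h eta delta Mb' k HCu HCv HU (Hcell i j Hi Hj)
                 Hh Hhd ltac:(lra) Hk1 HMb' HUC) as [cen Hcen].
      exists cen. intros _ _. exact Hcen.
    - exists (fun _ => c). intros Hi Hj. exfalso; auto. }
  destruct (functional_choice _ Hch) as [CEN HCEN].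
  set (rad := 2 * Mb' * h / INR k + 2 * eta * h).
  assert (Hrad0 : 0 < rad).
  { unfold rad. assert (0 < 2 * Mb' * h / INR k) by (apply Rdiv_lt_0_compat; nra). nra. }
  assert (Hrad4 : rad <= 4 * eta * h).
  { unfold rad. assert (2 * Mb' * h / INR k <= 2 * eta * h).
    { apply Rmult_le_reg_r with (INR k); auto. unfold Rdiv.
      rewrite Rmult_assoc, Rinv_l by lra. nra. }
    lra. }
  assert (Hcov : forall z, cbox c e z -> dx u z * dy v z - dy u z * dx v z = 0 ->
     exists i j p, (i < N)%nat /\ (j < N)%nat /\ (p < k)%nat /\ cbox (CEN (i, j) p) rad (u z, v z)).
  { intros z Hz Jz.
    assert (Hb1 : fst c - e <= fst z <= fst c - e + INR N * h).
    { destruct Hz as [Z1 _]. revert Z1; unfold Rabs; destruct Rcase_abs; intros; lra. }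
    assert (Hb2 : snd c - e <= snd z <= snd c - e + INR N * h).
    { destruct Hz as [_ Z1]. revert Z1; unfold Rabs; destruct Rcase_abs; intros; lra. }
    destruct (cell1d N h _ _ Hh ltac:(unfold N; lia) Hb1) as [i [Hi Hzi]].
    destruct (cell1d N h _ _ Hh ltac:(unfold N; lia) Hb2) as [j [Hj Hzj]].
    assert (Hzc : cbox (cc i j) (h/2) z).
    { unfold cc; split; simpl; apply Rabs_le; lra. }
    destruct (HCEN (i, j) Hi Hj z Hzc Jz) as [p [Hp Hin]].
    exists i, j, p. auto. }
  set (sigma := 5 * rad).
  assert (Hsig : 0 < sigma) by (unfold sigma; lra).
  destruct (nfloor_ex (2 * s / sigma)) as [m0 [Hm0a Hm0b]].
  { left; apply Rdiv_lt_0_compat; lra. }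
  set (m := S m0).
  assert (Hm : INR m = INR m0 + 1) by (unfold m; apply S_INR).
  set (gp := fun a b : nat => (fst w - s + INR a * sigma, snd w - s + INR b * sigma)).
  assert (Hex : exists a b, (a < m)%nat /\ (b < m)%nat /\ forall i j p, (i < N)%nat -> (j < N)%nat ->
                 (p < k)%nat -> ~ cbox (CEN (i, j) p) (2 * rad) (gp a b)).
  { apply NNPP. intros Hno.
    assert (Hall : forall x : nat, exists t : nat * nat * nat, (x < m * m)%nat ->
       (fst (fst t) < N)%nat /\ (snd (fst t) < N)%nat /\ (snd t < k)%nat /\
       cbox (CEN (fst (fst t), snd (fst t)) (snd t)) (2 * rad) (gp (x / m) (x mod m))%nat).
    { intros x. destruct (classic (x < m * m)%nat) as [Hx|Hx].
      2:{ exists (0, 0, 0)%nat. intros; lia. }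
      assert (Hm0 : m <> 0%nat) by (unfold m; lia).
      assert (Hxa : (x / m < m)%nat) by (apply Nat.Div0.div_lt_upper_bound; lia).
      assert (Hxb : (x mod m < m)%nat) by (apply Nat.mod_upper_bound; auto).
      apply NNPP. intros Hn. apply Hno. exists (x / m)%nat, (x mod m)%nat. split; auto. split; auto.
      intros i j p Hi Hj Hp Hc. apply Hn. exists (i, j, p). intros _. simpl. auto. }
    destruct (functional_choice _ Hall) as [T HT].
    assert (Hpg := pigeon (m * m) (N * N * k)
       (fun x => (fst (fst (T x)) * N + snd (fst (T x))) * k + snd (T x))%nat).
    assert (Hmm : (m * m <= N * N * k)%nat).
    { apply Hpg.
      - intros x Hx. destruct (HT x Hx) as [H1 [H2 [H3 _]]].
        simpl. revert H1 H2 H3. generalize (fst (fst (T x))) (snd (fst (T x))) (snd (T x)).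
        intros a0 b0 p0 H1 H2 H3.
        assert (a0 * N + b0 + 1 <= N * N)%nat by nia.
        assert ((a0 * N + b0 + 1) * k <= N * N * k)%nat by (apply Nat.mul_le_mono_r; auto).
        nia.
      - intros x y Hx Hy E. destruct (HT x Hx) as [H1 [H2 [H3 C1]]]. destruct (HT y Hy) as [H1' [H2' [H3' C2]]].
        apply code_inj in E; auto. destruct E as [E1 E2].
        apply code_inj in E1; auto. destruct E1 as [E1 E3].
        rewrite <- E1, <- E3, <- E2 in C2.
        set (Cn := CEN (fst (fst (T x)), snd (fst (T x))) (snd (T x))) in *.
        assert (Hm0 : m <> 0%nat) by (unfold m; lia).
        assert (Q1 : (x / m = y / m)%nat).
        { destruct (Nat.eq_dec (x / m) (y / m)) as [|Hne]; auto. exfalso.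
          apply INR_sep in Hne. destruct C1 as [C11 _]. destruct C2 as [C21 _]. unfold gp in C11, C21. cbn [fst snd] in C11, C21.
          pose proof (Rabs_triang (fst w - s + INR (x / m) * sigma - fst Cn) (fst Cn - (fst w - s + INR (y / m) * sigma))).
          rewrite (Rabs_minus_sym (fst Cn)) in H.
          replace (fst w - s + INR (x / m) * sigma - fst Cn + (fst Cn - (fst w - s + INR (y / m) * sigma)))
            with ((INR (x / m) - INR (y / m)) * sigma) in H by ring.
          rewrite Rabs_mult, (Rabs_pos_eq sigma) in H by lra.
          match type of Hne with 1 <= ?X => assert (1 * sigma <= X * sigma) by (apply Rmult_le_compat_r; lra) end.
          unfold sigma in *. lra. }
        assert (Q2 : (x mod m = y mod m)%nat).
        { destruct (Nat.eq_dec (x mod m) (y mod m)) as [|Hne]; auto. exfalso.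
          apply INR_sep in Hne. destruct C1 as [_ C11]. destruct C2 as [_ C21]. unfold gp in C11, C21. cbn [fst snd] in C11, C21.
          pose proof (Rabs_triang (snd w - s + INR (x mod m) * sigma - snd Cn) (snd Cn - (snd w - s + INR (y mod m) * sigma))).
          rewrite (Rabs_minus_sym (snd Cn)) in H.
          replace (snd w - s + INR (x mod m) * sigma - snd Cn + (snd Cn - (snd w - s + INR (y mod m) * sigma)))
            with ((INR (x mod m) - INR (y mod m)) * sigma) in H by ring.
          rewrite Rabs_mult, (Rabs_pos_eq sigma) in H by lra.
          match type of Hne with 1 <= ?X => assert (1 * sigma <= X * sigma) by (apply Rmult_le_compat_r; lra) end.
          unfold sigma in *. lra. }
        rewrite (Nat.div_mod_eq x m), (Nat.div_mod_eq y m). rewrite Q1, Q2. reflexivity. }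
    apply le_INR in Hmm. rewrite !mult_INR in Hmm.
    assert (A1 : INR m * sigma > 2 * s).
    { apply Rmult_lt_compat_r with (r := sigma) in Hm0b; auto. unfold Rdiv in Hm0b.
      rewrite Rmult_assoc, Rinv_l in Hm0b by lra. rewrite Hm. lra. }
    assert (A2 : INR m * (eta * h) > s / 10).
    { assert (sigma <= 20 * eta * h) by (unfold sigma; lra). pose proof (pos_INR m). nra. }
    assert (A3 : (INR m * (eta * h)) ^ 2 > (s / 10) ^ 2).
    { assert (0 < s / 10) by lra. nra. }
    assert (A4 : (INR m * (eta * h)) ^ 2 <= (INR N * INR N * INR k) * (eta * h) ^ 2).
    { replace ((INR m * (eta * h)) ^ 2) with (INR m * INR m * (eta * h) ^ 2) by ring.
      apply Rmult_le_compat_r; [nra|lra]. }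
    assert (A5 : (INR N * INR N * INR k) * (eta * h) ^ 2 = (INR N * h) ^ 2 * (eta * INR k) * eta) by ring.
    rewrite HNh in A5.
    assert (A6 : (2 * e) ^ 2 * (eta * INR k) * eta <= (2 * e) ^ 2 * (2 * Mb') * eta).
    { apply Rmult_le_compat_r; [lra|]. apply Rmult_le_compat_l; [nra|lra]. }
    nra. }
  destruct Hex as [a [b [Ha [Hb Hfar]]]].
  exists (gp a b), rad. split; auto. split.
  - intros y [Y1 Y2].
    assert (INR a <= INR m0) by (apply le_INR; unfold m in Ha; lia).
    assert (INR b <= INR m0) by (apply le_INR; unfold m in Hb; lia).
    assert (INR m0 * sigma <= 2 * s).
    { apply Rmult_le_compat_r with (r := sigma) in Hm0a; [|lra]. unfold Rdiv in Hm0a.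
      rewrite Rmult_assoc, Rinv_l in Hm0a by lra. lra. }
    pose proof (pos_INR a). pose proof (pos_INR b).
    unfold gp in Y1, Y2; simpl in Y1, Y2.
    assert (eta * h <= h) by nra.
    assert (rad < s) by lra.
    assert (0 <= INR a * sigma <= INR m0 * sigma) by (split; [apply Rmult_le_pos|apply Rmult_le_compat_r]; lra).
    assert (0 <= INR b * sigma <= INR m0 * sigma) by (split; [apply Rmult_le_pos|apply Rmult_le_compat_r]; lra).
    unfold s in *.
    split.
    + revert Y1. unfold Rabs. destruct Rcase_abs; destruct Rcase_abs; intros; lra.
    + revert Y2. unfold Rabs. destruct Rcase_abs; destruct Rcase_abs; intros; lra.
  - intros y Hy [z [Hz [Jz Ez]]].
    destruct (Hcov z Hz Jz) as [i [j [p [Hi [Hj [Hp Hin]]]]]].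
    apply (Hfar i j p Hi Hj Hp). rewrite Ez in Hin.
    destruct Hin as [I1 I2]. destruct Hy as [Y1 Y2].
    split.
    + pose proof (Rabs_triang (fst (gp a b) - fst y) (fst y - fst (CEN (i, j) p))).
      replace (fst (gp a b) - fst y + (fst y - fst (CEN (i, j) p))) with (fst (gp a b) - fst (CEN (i, j) p)) in H by ring.
      rewrite (Rabs_minus_sym (fst (gp a b)) (fst y)) in H. lra.
    + pose proof (Rabs_triang (snd (gp a b) - snd y) (snd y - snd (CEN (i, j) p))).
      replace (snd (gp a b) - snd y + (snd y - snd (CEN (i, j) p))) with (snd (gp a b) - snd (CEN (i, j) p)) in H by ring.
      rewrite (Rabs_minus_sym (snd (gp a b)) (snd y)) in H. lra.
Qed.

Lemma obox_conv c r p q t : obox c r p -> obox c r q ->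
  (Rmin (fst q) (fst p) <= t <= Rmax (fst q) (fst p) -> obox c r (t, snd q)) /\
  (Rmin (snd q) (snd p) <= t <= Rmax (snd q) (snd p) -> obox c r (fst p, t)).
Proof.
  intros [P1 P2] [Q1 Q2]. split; intros Ht; split; simpl; auto;
  unfold Rmin, Rmax in Ht; destruct Rle_dec; revert P1 P2 Q1 Q2; split_Rabs; intros; lra.
Qed.

Lemma lowlip (u v : pt -> R) U z :
  C1_on u U -> C1_on v U -> plane_open U -> U z ->
  dx u z * dy v z - dy u z * dx v z <> 0 ->
  exists rho k, 0 < rho /\ 0 < k /\ (forall p, obox z rho p -> U p) /\
    forall p q, obox z rho p -> obox z rho q ->
      k * (Rabs (fst p - fst q) + Rabs (snd p - snd q)) <= Rabs (u p - u q) + Rabs (v p - v q).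
Proof.
  intros HCu HCv HUo HUz HJ.
  set (a := dx u z) in *. set (b := dy u z) in *. set (c := dx v z) in *. set (d := dy v z) in *.
  set (D := a * d - b * c) in *.
  set (Mz := Rabs a + Rabs b + Rabs c + Rabs d).
  assert (HD : 0 < Rabs D) by (apply Rabs_pos_lt; auto).
  assert (HMz : 0 < Mz).
  { unfold Mz. pose proof (Rabs_pos a); pose proof (Rabs_pos b); pose proof (Rabs_pos c); pose proof (Rabs_pos d).
    destruct (Rle_lt_or_eq_dec 0 (Rabs a + Rabs b + Rabs c + Rabs d)) as [|E]; [lra|auto|].
    exfalso. assert (a = 0) by (apply Rabs_eq_0; lra). assert (b = 0) by (apply Rabs_eq_0; lra).
    assert (c = 0) by (apply Rabs_eq_0; lra). assert (d = 0) by (apply Rabs_eq_0; lra).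
    apply HJ. unfold D. rewrite H3, H4, H5, H6. ring. }
  set (eps := Rabs D / (4 * Mz)).
  assert (Heps : 0 < eps) by (unfold eps; apply Rdiv_lt_0_compat; lra).
  destruct (HCu z HUz) as [_ [_ [_ [Cux Cuy]]]].
  destruct (HCv z HUz) as [_ [_ [_ [Cvx Cvy]]]].
  destruct (Cux eps Heps) as [r1 [Hr1 R1]]. destruct (Cuy eps Heps) as [r2 [Hr2 R2]].
  destruct (Cvx eps Heps) as [r3 [Hr3 R3]]. destruct (Cvy eps Heps) as [r4 [Hr4 R4]].
  destruct (HUo z HUz) as [r0 [Hr0 R0]].
  set (rr := Rmin (Rmin r0 r1) (Rmin (Rmin r2 r3) r4)).
  assert (Hrr : 0 < rr) by (unfold rr; repeat apply Rmin_glb_lt; auto).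
  assert (Hrl : rr <= r0 /\ rr <= r1 /\ rr <= r2 /\ rr <= r3 /\ rr <= r4).
  { unfold rr. pose proof (Rmin_l (Rmin r0 r1) (Rmin (Rmin r2 r3) r4)).
    pose proof (Rmin_r (Rmin r0 r1) (Rmin (Rmin r2 r3) r4)).
    pose proof (Rmin_l r0 r1). pose proof (Rmin_r r0 r1). pose proof (Rmin_l (Rmin r2 r3) r4).
    pose proof (Rmin_r (Rmin r2 r3) r4). pose proof (Rmin_l r2 r3). pose proof (Rmin_r r2 r3). lra. }
  assert (Hball : forall p, obox z (rr / 2) p -> dist z p < rr) by (intros; apply obox_dist; auto).
  exists (rr / 2), (Rabs D / (2 * Mz)). split; [lra|]. split; [apply Rdiv_lt_0_compat; lra|].
  split.
  { intros p Hp. apply R0. specialize (Hball p Hp). lra. }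
  intros p q Hp Hq.
  set (v1 := fst p - fst q). set (v2 := snd p - snd q).
  assert (Happ : forall g, C1_on g U -> forall a0 b0,
     (forall p0, obox z (rr/2) p0 -> Rabs (dx g p0 - a0) < eps) ->
     (forall p0, obox z (rr/2) p0 -> Rabs (dy g p0 - b0) < eps) ->
     Rabs (g p - g q - (a0 * v1 + b0 * v2)) <= eps * (Rabs v1 + Rabs v2)).
  { intros g Hg a0 b0 Ha0 Hb0.
    destruct (mvt2 g U q p Hg) as [t [t' [Ht [Ht' E]]]].
    { intros t Ht. apply R0. eapply Rlt_le_trans; [apply Hball|lra]. apply (obox_conv z (rr/2) p q t Hp Hq). auto. }
    { intros t Ht. apply R0. eapply Rlt_le_trans; [apply Hball|lra]. apply (obox_conv z (rr/2) p q t Hp Hq). auto. }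
    rewrite E. fold v1 v2.
    replace (dx g (t, snd q) * v1 + dy g (fst p, t') * v2 - (a0 * v1 + b0 * v2)) with
      ((dx g (t, snd q) - a0) * v1 + (dy g (fst p, t') - b0) * v2) by ring.
    eapply Rle_trans; [apply Rabs_triang|]. rewrite !Rabs_mult.
    pose proof (Ha0 (t, snd q) (proj1 (obox_conv z (rr/2) p q t Hp Hq) Ht)).
    pose proof (Hb0 (fst p, t') (proj2 (obox_conv z (rr/2) p q t' Hp Hq) Ht')).
    assert (Rabs (dx g (t, snd q) - a0) * Rabs v1 <= eps * Rabs v1) by (apply Rmult_le_compat_r; [apply Rabs_pos|lra]).
    assert (Rabs (dy g (fst p, t') - b0) * Rabs v2 <= eps * Rabs v2) by (apply Rmult_le_compat_r; [apply Rabs_pos|lra]).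
    lra. }
  assert (Eu := Happ u HCu a b (fun p0 H => ltac:(apply (R1 p0); specialize (Hball p0 H); lra))
                            (fun p0 H => ltac:(apply (R2 p0); specialize (Hball p0 H); lra))).
  assert (Ev := Happ v HCv c d (fun p0 H => ltac:(apply (R3 p0); specialize (Hball p0 H); lra))
                            (fun p0 H => ltac:(apply (R4 p0); specialize (Hball p0 H); lra))).
  set (X := a * v1 + b * v2) in *. set (Y := c * v1 + d * v2) in *.
  assert (HXY : Rabs D * (Rabs v1 + Rabs v2) <= Mz * (Rabs X + Rabs Y)).
  { assert (E1 : D * v1 = d * X - b * Y) by (unfold D, X, Y; ring).
    assert (E2 : D * v2 = a * Y - c * X) by (unfold D, X, Y; ring).
    assert (F1 : Rabs D * Rabs v1 <= Rabs d * Rabs X + Rabs b * Rabs Y).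
    { rewrite <- Rabs_mult, E1, <- !Rabs_mult. unfold Rminus. rewrite <- (Rabs_Ropp (b * Y)). apply Rabs_triang. }
    assert (F2 : Rabs D * Rabs v2 <= Rabs a * Rabs Y + Rabs c * Rabs X).
    { rewrite <- Rabs_mult, E2, <- !Rabs_mult. unfold Rminus. rewrite <- (Rabs_Ropp (c * X)). apply Rabs_triang. }
    unfold Mz. pose proof (Rabs_pos a); pose proof (Rabs_pos b); pose proof (Rabs_pos c); pose proof (Rabs_pos d);
    pose proof (Rabs_pos X); pose proof (Rabs_pos Y). nra. }
  assert (HT : Rabs X + Rabs Y <= Rabs (u p - u q) + Rabs (v p - v q) + 2 * eps * (Rabs v1 + Rabs v2)).
  { pose proof (Rabs_triang (u p - u q) (-(u p - u q - X))).
    pose proof (Rabs_triang (v p - v q) (-(v p - v q - Y))).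
    rewrite Rabs_Ropp in H, H0.
    replace (u p - u q + - (u p - u q - X)) with X in H by ring.
    replace (v p - v q + - (v p - v q - Y)) with Y in H0 by ring. lra. }
  assert (Hme : Mz * (2 * eps) = Rabs D / 2) by (unfold eps; field; lra).
  assert (Mz * (Rabs X + Rabs Y) <= Mz * (Rabs (u p - u q) + Rabs (v p - v q)) + Rabs D / 2 * (Rabs v1 + Rabs v2)).
  { rewrite <- Hme. apply Rmult_le_compat_l with (r := Mz) in HT; lra. }
  apply Rmult_le_reg_l with (2 * Mz); [lra|].
  replace (2 * Mz * (Rabs D / (2 * Mz) * (Rabs v1 + Rabs v2))) with (Rabs D * (Rabs v1 + Rabs v2)) by (field; lra).
  lra.
Qed.

Lemma near_int x : exists a b : nat, Rabs (x - (INR a - INR b)) <= 1.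
Proof.
  destruct (Rle_dec 0 x) as [Hx|Hx].
  - destruct (nfloor_ex x Hx) as [n [H1 H2]]. exists n, 0%nat. simpl.
    rewrite Rminus_0_r. apply Rabs_le. lra.
  - destruct (nfloor_ex (- x)) as [n [H1 H2]]; [lra|]. exists 0%nat, n. simpl.
    apply Rabs_le. lra.
Qed.

Lemma dyadic z rho : 0 < rho -> exists n a b c d : nat,
  let e := / (INR n + 1) in
  let C := ((INR a - INR b) * e, (INR c - INR d) * e) in
  cbox C e z /\ forall p, obox C (2 * e) p -> obox z rho p.
Proof.
  intros Hr. destruct (arch_inv (rho / 3)) as [n Hn]; [lra|].
  set (e := / (INR n + 1)) in *.
  assert (He : 0 < e) by (unfold e; apply Rinv_0_lt_compat; pose proof (pos_INR n); lra).
  destruct (near_int (fst z / e)) as [a [b Hab]].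
  destruct (near_int (snd z / e)) as [c [d Hcd]].
  exists n, a, b, c, d. fold e. simpl.
  assert (K1 : Rabs (fst z - (INR a - INR b) * e) <= e).
  { replace (fst z - (INR a - INR b) * e) with ((fst z / e - (INR a - INR b)) * e) by (field; lra).
    rewrite Rabs_mult, (Rabs_pos_eq e) by lra. apply Rle_trans with (1 * e); [apply Rmult_le_compat_r; lra | lra]. }
  assert (K2 : Rabs (snd z - (INR c - INR d) * e) <= e).
  { replace (snd z - (INR c - INR d) * e) with ((snd z / e - (INR c - INR d)) * e) by (field; lra).
    rewrite Rabs_mult, (Rabs_pos_eq e) by lra. apply Rle_trans with (1 * e); [apply Rmult_le_compat_r; lra | lra]. }
  split; [split; simpl; auto|].
  intros p [P1 P2]. simpl in P1, P2. split.
  - pose proof (Rabs_triang (fst p - (INR a - INR b) * e) ((INR a - INR b) * e - fst z)).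
    replace (fst p - (INR a - INR b) * e + ((INR a - INR b) * e - fst z)) with (fst p - fst z) in H by ring.
    rewrite (Rabs_minus_sym ((INR a - INR b) * e) (fst z)) in H. lra.
  - pose proof (Rabs_triang (snd p - (INR c - INR d) * e) ((INR c - INR d) * e - snd z)).
    replace (snd p - (INR c - INR d) * e + ((INR c - INR d) * e - snd z)) with (snd p - snd z) in H by ring.
    rewrite (Rabs_minus_sym ((INR c - INR d) * e) (snd z)) in H. lra.
Qed.

Lemma ND_mono (F G : pt -> Prop) : ND F -> (forall y, G y -> F y) -> ND G.
Proof.
  intros H HGF w r Hr. destruct (H w r Hr) as [w' [r' [H1 [H2 H3]]]].
  exists w', r'. split; auto. split; auto. intros y Hy HG. apply (H3 y Hy), HGF, HG.
Qed.

Lemma ND_empty (F : pt -> Prop) : (forall y, ~ F y) -> ND F.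
Proof.
  intros H w r Hr. exists w, (r/2). split; [lra|]. split.
  - intros y [H1 H2]. split; lra.
  - intros y _. apply H.
Qed.

Section Main.
Variables (Rs R1 : pt -> Prop) (f : pt -> pt).

Definition GoodA (C : pt) (e : R) : Prop :=
  (forall p, obox C (2 * e) p -> R1 p) /\
  exists Mb, forall p, cbox C e p -> Rabs (dx (re f) p) <= Mb /\ Rabs (dy (re f) p) <= Mb /\
                                Rabs (dx (im f) p) <= Mb /\ Rabs (dy (im f) p) <= Mb.

Definition GoodB (C : pt) (e : R) : Prop :=
  (forall p, obox C (2 * e) p -> R1 p) /\
  exists k, 0 < k /\ forall p q, obox C (2 * e) p -> obox C (2 * e) q ->
      k * (Rabs (fst p - fst q) + Rabs (snd p - snd q)) <=
      Rabs (re f p - re f q) + Rabs (im f p - im f q).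

Definition Fidx (n a b c d t : nat) (y : pt) : Prop :=
  let e := / (INR n + 1) in
  let C := ((INR a - INR b) * e, (INR c - INR d) * e) in
  match t with
  | O => GoodA C e /\ exists z, cbox C e z /\ jac f z = 0 /\ f z = y
  | S _ => GoodB C e /\ exists z, cbox C e z /\ plane_boundary Rs z /\ f z = y
  end.

Definition Fam (k : nat) : pt -> Prop :=
  let '(n, k1) := Cantor.of_nat k in
  let '(a, k2) := Cantor.of_nat k1 in
  let '(b, k3) := Cantor.of_nat k2 in
  let '(c, k4) := Cantor.of_nat k3 in
  let '(d, t) := Cantor.of_nat k4 in
  Fidx n a b c d t.

Lemma Fam_surj n a b c d t : exists k, Fam k = Fidx n a b c d t.
Proof.
  exists (Cantor.to_nat (n, Cantor.to_nat (a, Cantor.to_nat (b, Cantor.to_nat (c, Cantor.to_nat (d, t)))))).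
  unfold Fam. rewrite !Cantor.cancel_of_to. reflexivity.
Qed.

End Main.

Lemma cbox_obox2 C e p : 0 < e -> cbox C e p -> obox C (2 * e) p.
Proof. intros He [H1 H2]; split; lra. Qed.

Lemma dist_refl z : dist z z = 0.
Proof. unfold dist. rewrite !Rminus_diag. replace (0 ^ 2 + 0 ^ 2) with 0 by ring. apply sqrt_0. Qed.

Theorem lemma4p15 (Rs R1 : pt -> Prop) (f : pt -> pt) :
  plane_open Rs -> plane_bounded Rs ->
  harmonic_on f Rs ->
  let P := fun z => plane_interior (plane_closure Rs) z /\ ~ Rs z in
  finite_set P -> (forall a, P a -> is_pole f a) ->
  plane_open R1 -> (forall z, plane_closure Rs z -> ~ P z -> R1 z) ->
  C1_map_on f R1 ->
  forall w, ~ plane_interior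
    (fun w' => (exists z, Rs z /\ jac f z = 0 /\ f z = w') \/
               (exists z, plane_boundary Rs z /\ ~ P z /\ f z = w')) w.
Proof.
  intros Hop Hbd Hharm P Hfin Hpole HR1 Hcl [HCu HCv] w [rho [Hrho Hin]].
  assert (HND : forall k, ND (Fam Rs R1 f k)).
  { intros k. unfold Fam.
    destruct (Cantor.of_nat k) as [n k1]. destruct (Cantor.of_nat k1) as [a k2].
    destruct (Cantor.of_nat k2) as [b k3]. destruct (Cantor.of_nat k3) as [c k4].
    destruct (Cantor.of_nat k4) as [d t]. unfold Fidx.
    set (e := / (INR n + 1)). set (C := ((INR a - INR b) * e, (INR c - INR d) * e)).
    assert (He : 0 < e) by (unfold e; apply Rinv_0_lt_compat; pose proof (pos_INR n); lra).
    destruct t as [|t].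
    - destruct (classic (GoodA R1 f C e)) as [[HU [Mb HMb]] | Hn].
      + apply ND_mono with (F := fun y => exists z, cbox C e z /\
            dx (re f) z * dy (im f) z - dy (re f) z * dx (im f) z = 0 /\ (re f z, im f z) = y).
        * apply (nd_F1 (re f) (im f) R1 C e Mb HCu HCv He); [|exact HMb].
          intros p Hp. apply HU, cbox_obox2; auto.
        * intros y [_ [z [Hz [Jz Ez]]]]. exists z. split; auto. split; [exact Jz|].
          rewrite <- Ez. unfold re, im. destruct (f z); reflexivity.
      + apply ND_empty. intros y [H _]; contradiction.
    - destruct (classic (GoodB R1 f C e)) as [[HU [kap [Hkap Hlow]]] | Hn].
      + apply ND_mono with (F := fun y => exists z, cbox C e z /\ plane_boundary Rs z /\
            (re f z, im f z) = y).
        * apply (nd_F2 Rs (re f) (im f) C e kap Hop He Hkap); [|exact Hlow].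
          intros p Hp. assert (HpU : R1 p) by (apply HU, cbox_obox2; auto).
          destruct (HCu p HpU) as [_ [_ [? _]]]. destruct (HCv p HpU) as [_ [_ [? _]]]. auto.
        * intros y [_ [z [Hz [Jz Ez]]]]. exists z. split; auto. split; [exact Jz|].
          rewrite <- Ez. unfold re, im. destruct (f z); reflexivity.
      + apply ND_empty. intros y [H _]; contradiction. }
  destruct (baire _ HND w (rho / 2) ltac:(lra)) as [y [Hy Hnot]].
  assert (HA := Hin y (obox_dist _ _ _ Hy)).
  assert (Hgoal : exists z, R1 z /\ f z = y /\ (jac f z = 0 \/ plane_boundary Rs z)).
  { destruct HA as [[z [Hz [Jz Ez]]] | [z [Hzb [HnP Ez]]]].
    - exists z. split; [|split; auto].
      apply Hcl.
      + intros r Hr. exists z. split; auto. rewrite dist_refl. auto.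
      + intros [_ Hn]. contradiction.
    - exists z. split; [apply Hcl; [apply Hzb|auto]|split; auto]. }
  destruct Hgoal as [z [HzU [Ez Hcase]]].
  destruct (classic (jac f z = 0)) as [Jz | Jz].
  - destruct (HR1 z HzU) as [r0 [Hr0 R0]].
    destruct (HCu z HzU) as [_ [_ [_ [Cux Cuy]]]].
    destruct (HCv z HzU) as [_ [_ [_ [Cvx Cvy]]]].
    destruct (Cux 1 Rlt_0_1) as [r1 [Hr1 R1']]. destruct (Cuy 1 Rlt_0_1) as [r2 [Hr2 R2']].
    destruct (Cvx 1 Rlt_0_1) as [r3 [Hr3 R3']]. destruct (Cvy 1 Rlt_0_1) as [r4 [Hr4 R4']].
    set (rr := Rmin (Rmin r0 r1) (Rmin (Rmin r2 r3) r4)).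
    assert (Hrr : 0 < rr) by (unfold rr; repeat apply Rmin_glb_lt; auto).
    assert (Hrl : rr <= r0 /\ rr <= r1 /\ rr <= r2 /\ rr <= r3 /\ rr <= r4).
    { unfold rr. pose proof (Rmin_l (Rmin r0 r1) (Rmin (Rmin r2 r3) r4)).
      pose proof (Rmin_r (Rmin r0 r1) (Rmin (Rmin r2 r3) r4)).
      pose proof (Rmin_l r0 r1). pose proof (Rmin_r r0 r1). pose proof (Rmin_l (Rmin r2 r3) r4).
      pose proof (Rmin_r (Rmin r2 r3) r4). pose proof (Rmin_l r2 r3). pose proof (Rmin_r r2 r3). lra. }
    destruct (dyadic z (rr / 2) ltac:(lra)) as [n [a [b [c [d [HzC Hsub]]]]]].
    set (e := / (INR n + 1)) in *. set (C := ((INR a - INR b) * e, (INR c - INR d) * e)) in *.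
    assert (He : 0 < e) by (unfold e; apply Rinv_0_lt_compat; pose proof (pos_INR n); lra).
    assert (Hd : forall p, obox C (2 * e) p -> dist z p < rr) by (intros p Hp; apply obox_dist, Hsub, Hp).
    destruct (Fam_surj Rs R1 f n a b c d 0) as [k Hk].
    apply (Hnot k). rewrite Hk. unfold Fidx. fold e. fold C. split.
    + split.
      * intros p Hp. apply R0. specialize (Hd p Hp). lra.
      * exists (Rabs (dx (re f) z) + Rabs (dy (re f) z) + Rabs (dx (im f) z) + Rabs (dy (im f) z) + 1).
        intros p Hp. specialize (Hd p (cbox_obox2 _ _ _ He Hp)).
        pose proof (R1' p ltac:(lra)). pose proof (R2' p ltac:(lra)).
        pose proof (R3' p ltac:(lra)). pose proof (R4' p ltac:(lra)).
        pose proof (Rabs_triang_inv (dx (re f) p) (dx (re f) z)).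
        pose proof (Rabs_triang_inv (dy (re f) p) (dy (re f) z)).
        pose proof (Rabs_triang_inv (dx (im f) p) (dx (im f) z)).
        pose proof (Rabs_triang_inv (dy (im f) p) (dy (im f) z)).
        pose proof (Rabs_pos (dx (re f) z)). pose proof (Rabs_pos (dy (re f) z)).
        pose proof (Rabs_pos (dx (im f) z)). pose proof (Rabs_pos (dy (im f) z)).
        repeat split; lra.
    + exists z. auto.
  - destruct Hcase as [Hcase|Hzb]; [contradiction|].
    destruct (lowlip (re f) (im f) R1 z HCu HCv HR1 HzU Jz) as [rho0 [kap [Hrho0 [Hkap [HU0 Hlow]]]]].
    destruct (dyadic z rho0 Hrho0) as [n [a [b [c [d [HzC Hsub]]]]]].
    set (e := / (INR n + 1)) in *. set (C := ((INR a - INR b) * e, (INR c - INR d) * e)) in *.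
    destruct (Fam_surj Rs R1 f n a b c d 1) as [k Hk].
    apply (Hnot k). rewrite Hk. unfold Fidx. fold e. fold C. split.
    + split.
      * intros p Hp. apply HU0, Hsub, Hp.
      * exists kap. split; [auto|]. intros p q Hp Hq. apply Hlow; apply Hsub; auto.
    + exists z. auto.
Qed.
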